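(* There exists an absolute constant $C_1>0$ such that for every $\delta_0>0$ the following holds: if $\|\mathcal T-\mathcal S\|_{\mathrm{op}}<\delta_0$ and $x\in\mathbb C^n$ satisfies $\|\nabla g(x^+)\|\ge C_1\delta_0 c\,(\|x\|+\|x^\natural\|)^3$, then $\nabla f(x^+)\neq0$.
   Context: Let $n,m\ge 1$, $a_1,\dots,a_m\in\mathbb C^n$ and $x^\natural\in\mathbb C^n$ with $x^\natural\neq0$. For $a,b\in\mathbb C^n$ write $\langle a,b\rangle=\sum_{j}a_j\overline{b_j}$ and let $\|\cdot\|$ be the Euclidean norm. Let $y_i=|\langle a_i,x^\natural\rangle|^2$. For $v\in\mathbb C^n$ put $v^+=(\mathrm{Re}\,v,\mathrm{Im}\,v)\in\mathbb R^{2n}$ and $v^-=(-\mathrm{Im}\,v,\mathrm{Re}\,v)$; $x$ and $x^+$ always correspond. Define $f:\mathbb R^{2n}\to\mathbb R$ by $f(x^+)=\sum_{i=1}^m\big(|\langle a_i,x\rangle|^2-y_i\big)^2$. Fix $\sigma>0$ (in the paper, $\sigma^2=\mathrm{Var}((a_i^+)_1)$ for random measurement vectors), set $c=m\sigma^4$, and define $g:\mathbb R^{2n}\to\mathbb R$ by $g(x^+)=8c\left(\|x\|^4+\|x^\natural\|^4-|\langle x,x^\natural\rangle|^2-\|x\|^2\|x^\natural\|^2\right)$. Gradients are with respect to $x^+\in\mathbb R^{2n}$. Define the order-4 tensors on $\mathbb R^{2n}$: $\mathcal T=\frac1c\sum_{i=1}^m(a_i^+)^{\otimes 4}$ and $\mathcal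 S_{i_1i_2i_3i_4}=\mathbf 1_{i_1=i_2,\,i_3=i_4}+\mathbf 1_{i_1=i_3,\,i_2=i_4}+\mathbf 1_{i_1=i_4,\,i_2=i_3}$, and $\|\mathcal R\|_{\mathrm{op}}=\sup\{\langle \mathcal R,u_1\otimes u_2\otimes u_3\otimes u_4\rangle:\ u_j\in\mathbb R^{2n},\ \|u_1\|\|u_2\|\|u_3\|\|u_4\|=1\}$ (tensor inner product = sum of entrywise products). *)

(* Defs.v *)
From HB Require Import structures.
From mathcomp Require Import all_boot all_order all_algebra.
From mathcomp Require Import all_classical all_reals all_analysis.
From mathcomp Require Import complex.
Set Implicit Arguments. Unset Strict Implicit. Unset Printing Implicit Defensive.
Import Order.TTheory GRing.Theory Num.Theory.
Import numFieldNormedType.Exports.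
Local Open Scope ring_scope.
Local Open Scope classical_set_scope.

Section PhaseRetrieval.
Variable R : realType.

Definition cvec (n : nat) := 'rV[R[i]]_n.

Definition cinner n (a b : cvec n) : R[i] := \sum_(j < n) a 0 j * conjc (b 0 j).

Definition cabs (z : R[i]) : R := Num.sqrt ((@complex.Re R z) ^+ 2 + (@complex.Im R z) ^+ 2).

Definition cnorm n (x : cvec n) : R := Num.sqrt (\sum_(j < n) cabs (x 0 j) ^+ 2).

Definition enorm N (v : 'rV[R]_N) : R := Num.sqrt (\sum_(j < N) v 0 j ^+ 2).

Definition vplus n (v : cvec n) : 'rV[R]_(n + n) :=
  row_mx (\row_(j < n) @complex.Re R (v 0 j)) (\row_(j < n) @complex.Im R (v 0 j)).

Definition vofplus n (u : 'rV[R]_(n + n)) : cvec n :=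
  \row_(j < n) Complex (lsubmx u 0 j) (rsubmx u 0 j).

Definition ymeas n m (a : 'I_m -> cvec n) (xnat : cvec n) (i : 'I_m) : R :=
  cabs (cinner (a i) xnat) ^+ 2.

Definition fobj n m (a : 'I_m -> cvec n) (xnat : cvec n) (u : 'rV[R]_(n + n)) : R :=
  \sum_(i < m) (cabs (cinner (a i) (vofplus u)) ^+ 2 - ymeas a xnat i) ^+ 2.

Definition cconst (m : nat) (sigma : R) : R := m%:R * sigma ^+ 4.

Definition gobj n (m : nat) (sigma : R) (xnat : cvec n) (u : 'rV[R]_(n + n)) : R :=
  let x := vofplus u in
  8 * cconst m sigma * (cnorm x ^+ 4 + cnorm xnat ^+ 4
     - cabs (cinner x xnat) ^+ 2 - cnorm x ^+ 2 * cnorm xnat ^+ 2).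

Definition grad N (F : 'rV[R]_N -> R) (u : 'rV[R]_N) : 'rV[R]_N :=
  \row_(j < N) ('D_(delta_mx 0 j) F u).

Definition tensor4 N := 'I_N -> 'I_N -> 'I_N -> 'I_N -> R.

Definition tsub N (A B : tensor4 N) : tensor4 N :=
  fun i1 i2 i3 i4 => A i1 i2 i3 i4 - B i1 i2 i3 i4.

Definition tensT n m (a : 'I_m -> cvec n) (sigma : R) : tensor4 (n + n) :=
  fun i1 i2 i3 i4 => (cconst m sigma)^-1 *
    \sum_(i < m) (vplus (a i) 0 i1 * vplus (a i) 0 i2 * vplus (a i) 0 i3 * vplus (a i) 0 i4).

Definition tensS N : tensor4 N :=
  fun i1 i2 i3 i4 =>
    ((i1 == i2) && (i3 == i4))%:R + ((i1 == i3) && (i2 == i4))%:R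
    + ((i1 == i4) && (i2 == i3))%:R.

Definition tpair N (A : tensor4 N) (u1 u2 u3 u4 : 'rV[R]_N) : R :=
  \sum_(i1 < N) \sum_(i2 < N) \sum_(i3 < N) \sum_(i4 < N)
     A i1 i2 i3 i4 * u1 0 i1 * u2 0 i2 * u3 0 i3 * u4 0 i4.

Definition opnorm N (A : tensor4 N) : R :=
  sup [set t : R | exists u1 u2 u3 u4 : 'rV[R]_N,
         enorm u1 * enorm u2 * enorm u3 * enorm u4 = 1 /\ t = tpair A u1 u2 u3 u4].

End PhaseRetrieval.

(* Main.v *)
Require Import Defs.
From HB Require Import structures.
From mathcomp Require Import all_boot all_order all_algebra.
From mathcomp Require Import all_classical all_reals all_analysis.
From mathcomp Require Import complex.
From mathcomp Require Import ring lra.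
Import Order.TTheory GRing.Theory Num.Theory.
Import numFieldNormedType.Exports.
Local Open Scope ring_scope.
Local Open Scope classical_set_scope.
Set Implicit Arguments. Unset Strict Implicit.
Section Aux.
Variable R : realType.

Lemma derive_quartic N (F : 'rV[R]_N -> R) (u e : 'rV[R]_N) (b p2 p3 p4 : R) :
  (forall h : R, F (u + h *: e) = F u + h * b + h^+2 * p2 + h^+3 * p3 + h^+4 * p4) ->
  'D_e F u = b.
Proof.
move=> H; rewrite /derive.
apply: cvg_lim => //.
have E : {near dnbhs (0:R), (fun h : R => b + h * (p2 + h * (p3 + h * p4))) =1
    (fun h => h^-1 *: ((F \o shift u) (h *: e) - F u))}.
  near=> h.
  have h0 : h != 0 by near: h; exact: nbhs_dnbhs_neq.
  rewrite /= [h *: e + u]addrC H.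
  rewrite [RHS](_ : _ = h^-1 * (h * b + h ^+ 2 * p2 + h ^+ 3 * p3 + h ^+ 4 * p4)); last first.
    by rewrite /GRing.scale /=; congr (_ * _); ring.
  by field.

apply: (cvg_trans (near_eq_cvg E)).
have C : (fun h : R => b + h * (p2 + h * (p3 + h * p4))) @ (nbhs (0:R)) --> b + 0 * (p2 + 0 * (p3 + 0 * p4)).
  apply: cvgD; first exact: cvg_cst.
  apply: cvgM; first exact: cvg_id.
  apply: cvgD; first exact: cvg_cst.
  apply: cvgM; first exact: cvg_id.
  apply: cvgD; first exact: cvg_cst.
  apply: cvgM; first exact: cvg_id.
  exact: cvg_cst.
rewrite !mul0r addr0 in C.
exact: cvg_within_filter C.
Unshelve. all: by end_near.
Qed.

Definition dot K (p q : 'rV[R]_K) : R := \sum_(j < K) p 0 j * q 0 j.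

Lemma dotC K (p q : 'rV[R]_K) : dot p q = dot q p.
Proof. by apply: eq_bigr => j _; rewrite mulrC. Qed.

Lemma dotDZr K (p q r : 'rV[R]_K) k : dot p (k *: q + r) = k * dot p q + dot p r.
Proof.
rewrite /dot mulr_sumr -big_split; apply: eq_bigr => j _; rewrite !mxE; rewrite /=; ring.
Qed.

Lemma dotDZl K (p q r : 'rV[R]_K) k : dot (k *: q + r) p = k * dot q p + dot r p.
Proof. by rewrite dotC dotDZr ![dot p _]dotC. Qed.

Lemma dot_row_mx K1 K2 (p1 q1 : 'rV[R]_K1) (p2 q2 : 'rV[R]_K2) :
  dot (row_mx p1 p2) (row_mx q1 q2) = dot p1 q1 + dot p2 q2.
Proof. by rewrite /dot big_split_ord /=; congr (_ + _); apply: eq_bigr => j _; rewrite ?row_mxEl ?row_mxEr. Qed.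

Lemma dotNl K (p q : 'rV[R]_K) : dot (- p) q = - dot p q.
Proof. by rewrite /dot -sumrN; apply: eq_bigr => j _; rewrite !mxE mulNr. Qed.

Lemma dotNr K (p q : 'rV[R]_K) : dot p (- q) = - dot p q.
Proof. by rewrite dotC dotNl dotC. Qed.

Definition enorm' K (p : 'rV[R]_K) := Num.sqrt (dot p p).

Lemma enormE K (p : 'rV[R]_K) : enorm p = Num.sqrt (dot p p).
Proof. by rewrite /enorm /dot; congr Num.sqrt; apply: eq_bigr => j _; rewrite expr2. Qed.

Lemma dot_ge0 K (p : 'rV[R]_K) : 0 <= dot p p.
Proof. by rewrite /dot; apply: sumr_ge0 => j _; rewrite -expr2 sqr_ge0. Qed.

Lemma enorm_sq K (p : 'rV[R]_K) : enorm p ^+ 2 = dot p p.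
Proof. by rewrite enormE sqr_sqrtr // dot_ge0. Qed.

Lemma enorm_ge0 K (p : 'rV[R]_K) : 0 <= enorm p.
Proof. by rewrite enormE sqrtr_ge0. Qed.

Variable n : nat.
Local Notation N := (n + n)%N.

Definition Jm (u : 'rV[R]_N) : 'rV[R]_N := row_mx (- rsubmx u) (lsubmx u).

Lemma dotJJ (p q : 'rV[R]_N) : dot (Jm p) (Jm q) = dot p q.
Proof.
rewrite /Jm dot_row_mx -{3}(hsubmxK p) -{3}(hsubmxK q) dot_row_mx dotNl dotNr opprK addrC.
by [].
Qed.

Lemma dotJl (p q : 'rV[R]_N) : dot (Jm p) q = - dot p (Jm q).
Proof.
rewrite /Jm -[in LHS](hsubmxK q) -[in RHS](hsubmxK p) !dot_row_mx dotNl dotNr.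
rewrite (dotC (rsubmx p)) (dotC (lsubmx p)); ring.
Qed.

Lemma dotJself (p : 'rV[R]_N) : dot p (Jm p) = 0.
Proof.
have := dotJl p p; rewrite dotC => H.
have : 2 * dot p (Jm p) = 0 by rewrite mulr2n mulrDl mul1r {1}H addNr.
by move/eqP; rewrite mulf_eq0 pnatr_eq0 /= => /eqP.
Qed.

Lemma JDZ (p q : 'rV[R]_N) k : Jm (k *: p + q) = k *: Jm p + Jm q.
Proof.
rewrite /Jm !linearD !linearZ /= scale_row_mx add_row_mx scalerN //.
Qed.

Lemma enormJ (p : 'rV[R]_N) : enorm (Jm p) = enorm p.
Proof. by rewrite !enormE dotJJ. Qed.


Local Notation Rc := (@complex.Re R).
Local Notation Ic := (@complex.Im R).

Lemma ReD (x y : R[i]) : Rc (x + y) = Rc x + Rc y.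
Proof. by case: x => ? ?; case: y => ? ?. Qed.
Lemma ImD (x y : R[i]) : Ic (x + y) = Ic x + Ic y.
Proof. by case: x => ? ?; case: y => ? ?. Qed.

Lemma Re_sum (I : Type) (r : seq I) (F : I -> R[i]) :
  Rc (\sum_(i <- r) F i) = \sum_(i <- r) Rc (F i).
Proof. by apply: (big_morph _ ReD). Qed.
Lemma Im_sum (I : Type) (r : seq I) (F : I -> R[i]) :
  Ic (\sum_(i <- r) F i) = \sum_(i <- r) Ic (F i).
Proof. by apply: (big_morph _ ImD). Qed.

Lemma Re_mulconj (a b : R[i]) : Rc (a * conjc b) = Rc a * Rc b + Ic a * Ic b.
Proof. case: a => a1 a2; case: b => b1 b2 /=; ring. Qed.
Lemma Im_mulconj (a b : R[i]) : Ic (a * conjc b) = Ic a * Rc b - Rc a * Ic b.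
Proof. case: a => a1 a2; case: b => b1 b2 /=; ring. Qed.

Lemma cinner_Re (a x : cvec R n) : Rc (cinner a x) = dot (vplus a) (vplus x).
Proof.
rewrite /cinner Re_sum /vplus dot_row_mx /dot -big_split /=.
by apply: eq_bigr => j _; rewrite !mxE Re_mulconj.
Qed.

Lemma Jvplus (x : cvec R n) :
  Jm (vplus x) = row_mx (- \row_(j < n) Ic (x 0 j)) (\row_(j < n) Rc (x 0 j)).
Proof. by rewrite /Jm /vplus row_mxKl row_mxKr. Qed.

Lemma cinner_Im (a x : cvec R n) : Ic (cinner a x) = dot (vplus a) (Jm (vplus x)).
Proof.
rewrite /cinner Im_sum Jvplus /vplus dot_row_mx /dot -big_split /=.
by apply: eq_bigr => j _; rewrite !mxE Im_mulconj; ring.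
Qed.

Lemma cabs2 (z : R[i]) : cabs z ^+ 2 = Rc z ^+ 2 + Ic z ^+ 2.
Proof. by rewrite /cabs sqr_sqrtr // addr_ge0 // sqr_ge0. Qed.

Lemma cabs_cinner2 (a x : cvec R n) :
  cabs (cinner a x) ^+ 2 = dot (vplus a) (vplus x) ^+ 2 + dot (vplus a) (Jm (vplus x)) ^+ 2.
Proof. by rewrite cabs2 cinner_Re cinner_Im. Qed.

Lemma vplusK (u : 'rV[R]_N) : vplus (vofplus u) = u.
Proof.
rewrite /vplus /vofplus -[RHS]hsubmxK; congr row_mx; apply/rowP => j; rewrite !mxE //.
Qed.

Lemma dot_vplus (x : cvec R n) :
  dot (vplus x) (vplus x) = \sum_(j < n) (Rc (x 0 j) ^+ 2 + Ic (x 0 j) ^+ 2).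
Proof.
rewrite /vplus dot_row_mx /dot -big_split /=.
by apply: eq_bigr => j _; rewrite !mxE !expr2.
Qed.

Lemma cnorm_dot (x : cvec R n) : cnorm x = Num.sqrt (dot (vplus x) (vplus x)).
Proof.
rewrite dot_vplus /cnorm; congr Num.sqrt; apply: eq_bigr => j _; exact: cabs2.
Qed.

Lemma cnorm_enorm (x : cvec R n) : cnorm x = enorm (vplus x).
Proof. by rewrite cnorm_dot enormE. Qed.

Lemma vplus_dot_eq0 (x : cvec R n) : dot (vplus x) (vplus x) = 0 -> x = 0.
Proof.
rewrite dot_vplus => /eqP; rewrite psumr_eq0; last first.
  by move=> j _; rewrite addr_ge0 // sqr_ge0.
move=> /allP H; apply/rowP => j; rewrite mxE.
have := H j (mem_index_enum _); rewrite paddr_eq0 ?sqr_ge0 // !sqrf_eq0.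
case/andP => /eqP h1 /eqP h2.
by case: (x 0 j) h1 h2 => /= ? ? -> ->.
Qed.


Section Tens.
Variable K : nat.
Implicit Types (p q : 'rV[R]_K) (D : tensor4 R K).

Lemma tpair_sub (A B : tensor4 R K) (p1 p2 p3 p4 : 'rV[R]_K) :
  tpair (tsub A B) p1 p2 p3 p4 = tpair A p1 p2 p3 p4 - tpair B p1 p2 p3 p4.
Proof.
rewrite /tpair -sumrB; apply: eq_bigr => i1 _; rewrite -sumrB; apply: eq_bigr => i2 _.
rewrite -sumrB; apply: eq_bigr => i3 _; rewrite -sumrB; apply: eq_bigr => i4 _.
rewrite /tsub; ring.
Qed.

Lemma tpair_scale (k : R) D (p1 p2 p3 p4 : 'rV[R]_K) :
  tpair (fun i1 i2 i3 i4 => k * D i1 i2 i3 i4) p1 p2 p3 p4 = k * tpair D p1 p2 p3 p4.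
Proof.
rewrite /tpair mulr_sumr; apply: eq_bigr => i1 _; rewrite mulr_sumr; apply: eq_bigr => i2 _.
rewrite mulr_sumr; apply: eq_bigr => i3 _; rewrite mulr_sumr; apply: eq_bigr => i4 _.
ring.
Qed.

Lemma tpair_sum m (G : 'I_m -> tensor4 R K) (p1 p2 p3 p4 : 'rV[R]_K) :
  tpair (fun i1 i2 i3 i4 => \sum_(i < m) G i i1 i2 i3 i4) p1 p2 p3 p4
  = \sum_(i < m) tpair (G i) p1 p2 p3 p4.
Proof.
rewrite /tpair [RHS]exchange_big; apply: eq_bigr => i1 _.
rewrite [RHS]exchange_big; apply: eq_bigr => i2 _.
rewrite [RHS]exchange_big; apply: eq_bigr => i3 _.
rewrite [RHS]exchange_big; apply: eq_bigr => i4 _.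
by rewrite !mulr_suml.
Qed.

Lemma tpair_rank1 (v : 'rV[R]_K) (p1 p2 p3 p4 : 'rV[R]_K) :
  tpair (fun i1 i2 i3 i4 => v 0 i1 * v 0 i2 * v 0 i3 * v 0 i4) p1 p2 p3 p4
  = dot v p1 * dot v p2 * dot v p3 * dot v p4.
Proof.
rewrite /tpair /dot -!mulrA mulr_suml; apply: eq_bigr => i1 _.
rewrite mulr_suml mulr_sumr; apply: eq_bigr => i2 _.
rewrite mulr_suml !mulr_sumr; apply: eq_bigr => i3 _.
rewrite !mulr_sumr; apply: eq_bigr => i4 _.
ring.
Qed.

Lemma tpair_scale1 (k : R) D (p1 p2 p3 p4 : 'rV[R]_K) :
  tpair D (k *: p1) p2 p3 p4 = k * tpair D p1 p2 p3 p4.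
Proof.
rewrite /tpair mulr_sumr; apply: eq_bigr => i1 _; rewrite mulr_sumr; apply: eq_bigr => i2 _.
rewrite mulr_sumr; apply: eq_bigr => i3 _; rewrite mulr_sumr; apply: eq_bigr => i4 _.
rewrite !mxE; ring.
Qed.

Lemma sum_delta (j : 'I_K) (F : 'I_K -> R) : \sum_(i < K) (j == i)%:R * F i = F j.
Proof.
rewrite (bigD1 j) //= eqxx mul1r big1 ?addr0 // => i /negbTE.
by rewrite eq_sym => ->; rewrite mul0r.
Qed.

Lemma tensS_inner (i1 i2 i3 : 'I_K) (p4 : 'rV[R]_K) :
  \sum_(i4 < K) @tensS R K i1 i2 i3 i4 * p4 0 i4
  = (i1 == i2)%:R * p4 0 i3 + (i1 == i3)%:R * p4 0 i2 + (i2 == i3)%:R * p4 0 i1.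
Proof.
rewrite (eq_bigr (fun i4 => (i1 == i2)%:R * ((i3 == i4)%:R * p4 0 i4)
   + (i1 == i3)%:R * ((i2 == i4)%:R * p4 0 i4) + (i2 == i3)%:R * ((i1 == i4)%:R * p4 0 i4))).
  by rewrite !big_split /= -!mulr_sumr !sum_delta.
move=> i4 _; rewrite /tensS -!mulnb !natrM; ring.
Qed.

Lemma tensS_pair (p1 p2 p3 p4 : 'rV[R]_K) :
  tpair (@tensS R K) p1 p2 p3 p4
  = dot p1 p2 * dot p3 p4 + dot p1 p3 * dot p2 p4 + dot p1 p4 * dot p2 p3.
Proof.
rewrite /tpair.
rewrite (eq_bigr (fun i1 => p1 0 i1 * p2 0 i1 * dot p3 p4 + p1 0 i1 * p3 0 i1 * dot p2 p4
   + p1 0 i1 * p4 0 i1 * dot p2 p3)).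
  by rewrite !big_split /= -!mulr_suml.
move=> i1 _.
rewrite (eq_bigr (fun i2 => (p1 0 i1 * dot p3 p4) * ((i1 == i2)%:R * p2 0 i2)
   + (p1 0 i1 * p3 0 i1) * (p2 0 i2 * p4 0 i2) + (p1 0 i1 * p4 0 i1) * (p2 0 i2 * p3 0 i2))).
  rewrite !big_split /= -!mulr_sumr sum_delta /dot; ring.
move=> i2 _.
rewrite (eq_bigr (fun i3 => (p1 0 i1 * p2 0 i2 * (i1 == i2)%:R) * (p3 0 i3 * p4 0 i3)
   + (p1 0 i1 * p2 0 i2 * p4 0 i2) * ((i1 == i3)%:R * p3 0 i3)
   + (p1 0 i1 * p2 0 i2 * p4 0 i1) * ((i2 == i3)%:R * p3 0 i3))).
  rewrite !big_split /= -!mulr_sumr !sum_delta /dot; ring.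
move=> i3 _.
rewrite (eq_bigr (fun i4 => p1 0 i1 * p2 0 i2 * p3 0 i3 * (@tensS R K i1 i2 i3 i4 * p4 0 i4))).
  rewrite -mulr_sumr tensS_inner; ring.
by move=> i4 _; ring.
Qed.

Lemma dotZr (p q : 'rV[R]_K) k : dot p (k *: q) = k * dot p q.
Proof. by rewrite /dot mulr_sumr; apply: eq_bigr => j _; rewrite mxE /=; ring. Qed.
Lemma dotZl (p q : 'rV[R]_K) k : dot (k *: p) q = k * dot p q.
Proof. by rewrite dotC dotZr dotC. Qed.

Lemma enormZ (p : 'rV[R]_K) k : enorm (k *: p) = `|k| * enorm p.
Proof.
by rewrite !enormE dotZl dotZr mulrA -expr2 sqrtrM ?sqr_ge0 // sqrtr_sqr.
Qed.

Lemma dot_eq0 (p : 'rV[R]_K) : dot p p = 0 -> p = 0.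
Proof.
move=> /eqP; rewrite psumr_eq0; last by move=> j _; rewrite -expr2 sqr_ge0.
move=> /allP H; apply/rowP => j; rewrite mxE.
have := H j (mem_index_enum _); rewrite -expr2 sqrf_eq0.
by move/eqP.
Qed.

Lemma enorm_eq0 (p : 'rV[R]_K) : enorm p = 0 -> p = 0.
Proof. by rewrite enormE => /eqP; rewrite sqrtr_eq0 => H; apply: dot_eq0; apply/eqP; rewrite eq_le H dot_ge0. Qed.

Lemma abs_le_enorm (p : 'rV[R]_K) j : `|p 0 j| <= enorm p.
Proof.
rewrite /enorm -sqrtr_sqr ler_sqrt; last by apply: sumr_ge0 => i _; rewrite sqr_ge0.
rewrite (bigD1 j) //= lerDl; apply: sumr_ge0 => i _; exact: sqr_ge0.
Qed.

Lemma tpair_abs_le D (p1 p2 p3 p4 : 'rV[R]_K) :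
  `|tpair D p1 p2 p3 p4| <=
  (\sum_(i1 < K) \sum_(i2 < K) \sum_(i3 < K) \sum_(i4 < K) `|D i1 i2 i3 i4|)
  * (enorm p1 * enorm p2 * enorm p3 * enorm p4).
Proof.
rewrite /tpair; apply: (le_trans (ler_norm_sum _ _ _)); rewrite mulr_suml; apply: ler_sum => i1 _.
apply: (le_trans (ler_norm_sum _ _ _)); rewrite mulr_suml; apply: ler_sum => i2 _.
apply: (le_trans (ler_norm_sum _ _ _)); rewrite mulr_suml; apply: ler_sum => i3 _.
apply: (le_trans (ler_norm_sum _ _ _)); rewrite mulr_suml; apply: ler_sum => i4 _.
rewrite !normrM -!mulrA; apply: ler_wpM2l => //.
apply: ler_pM => //; first exact: abs_le_enorm.
apply: ler_pM => //; first exact: abs_le_enorm.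
by apply: ler_pM => //; exact: abs_le_enorm.
Qed.

Lemma tpair0 D (p1 p2 p3 p4 : 'rV[R]_K) :
  p1 = 0 \/ p2 = 0 \/ p3 = 0 \/ p4 = 0 -> tpair D p1 p2 p3 p4 = 0.
Proof.
move=> H; rewrite /tpair; apply: big1 => i1 _; apply: big1 => i2 _; apply: big1 => i3 _;
  apply: big1 => i4 _.
by case: H => [->|[->|[->|->]]]; rewrite mxE !(mulr0, mul0r).
Qed.

Lemma tpair_le_opnorm D (p1 p2 p3 p4 : 'rV[R]_K) :
  tpair D p1 p2 p3 p4 <= opnorm D * (enorm p1 * enorm p2 * enorm p3 * enorm p4).
Proof.
set P := enorm p1 * enorm p2 * enorm p3 * enorm p4.
have P0 : 0 <= P by rewrite /P !mulr_ge0 // enorm_ge0.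
have hub : has_ubound [set t : R | exists u1 u2 u3 u4 : 'rV[R]_K,
         enorm u1 * enorm u2 * enorm u3 * enorm u4 = 1 /\ t = tpair D u1 u2 u3 u4].
  exists (\sum_(i1 < K) \sum_(i2 < K) \sum_(i3 < K) \sum_(i4 < K) `|D i1 i2 i3 i4|).
  move=> t [u1 [u2 [u3 [u4 [H1 ->]]]]].
  apply: (le_trans (ler_norm _)); apply: (le_trans (tpair_abs_le _ _ _ _ _)).
  by rewrite H1 mulr1.
case: (eqVneq P 0) => HP.
  rewrite HP mulr0 tpair0 //.
  move/eqP: HP; rewrite /P !mulf_eq0 => /orP [/orP [/orP [] | ] | ] /eqP /enorm_eq0 ->; tauto.
have Ppos : 0 < P by rewrite lt_def HP P0.
have : tpair D (P^-1 *: p1) p2 p3 p4 <= opnorm D.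
  apply: (ub_le_sup hub); exists (P^-1 *: p1), p2, p3, p4; split => //.
  rewrite enormZ ger0_norm ?invr_ge0 //.
  rewrite (_ : _ * _ = P^-1 * P); first by rewrite mulVf.
  by rewrite /P !mulrA.
rewrite tpair_scale1 -ler_pdivlMl ?invr_gt0 // invrK.
by rewrite mulrC.
Qed.

Lemma tpair_abs_opnorm D (p1 p2 p3 p4 : 'rV[R]_K) :
  `|tpair D p1 p2 p3 p4| <= opnorm D * (enorm p1 * enorm p2 * enorm p3 * enorm p4).
Proof.
rewrite ler_norml tpair_le_opnorm andbT lerNl.
have := tpair_le_opnorm D ((-1) *: p1) p2 p3 p4.
by rewrite tpair_scale1 enormZ normrN normr1 mul1r mulN1r.
Qed.

End Tens.


Lemma sum_quartic m (G X Y1 Y2 Y3 Y4 : 'I_m -> R) h :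
  (forall i, G i = X i + h * Y1 i + h ^+ 2 * Y2 i + h ^+ 3 * Y3 i + h ^+ 4 * Y4 i) ->
  \sum_(i < m) G i = \sum_(i < m) X i + h * \sum_(i < m) Y1 i + h ^+ 2 * \sum_(i < m) Y2 i
     + h ^+ 3 * \sum_(i < m) Y3 i + h ^+ 4 * \sum_(i < m) Y4 i.
Proof. by move=> H; rewrite (eq_bigr _ (fun i _ => H i)) !big_split /= -!mulr_sumr. Qed.

Lemma lin_expand K (L : 'rV[R]_K -> R) :
  (forall k p q, L (k *: p + q) = k * L p + L q) ->
  forall e, L e = \sum_(j < K) e 0 j * L (delta_mx 0 j).
Proof.
move=> HL e.
have L0 : L 0 = 0.
  have := HL 1 0 0; rewrite scaler0 addr0 mul1r => H; lra.
rewrite {1}(row_sum_delta e).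
apply: (big_rec2 (fun y1 y2 => L y1 = y2)) => // j y1 y2 _ <-.
by rewrite HL.
Qed.

Section Fix.
Variables (m : nat) (a : 'I_m -> cvec R n) (sigma : R) (xnat : cvec R n).
Local Notation A i := (vplus (a i)).
Local Notation z := (vplus xnat).
Local Notation c := (cconst m sigma).

Lemma fobj_expand (w : 'rV[R]_N) : fobj a xnat w =
  \sum_(i < m) (dot (A i) w ^+ 2 + dot (A i) (Jm w) ^+ 2 - ymeas a xnat i) ^+ 2.
Proof. by apply: eq_bigr => i _; rewrite cabs_cinner2 vplusK. Qed.

Definition Lf (u e : 'rV[R]_N) : R :=
  \sum_(i < m) 4 * (dot (A i) u ^+ 2 + dot (A i) (Jm u) ^+ 2 - ymeas a xnat i)
     * (dot (A i) u * dot (A i) e + dot (A i) (Jm u) * dot (A i) (Jm e)).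

Lemma Df (u e : 'rV[R]_N) : 'D_e (fobj a xnat) u = Lf u e.
Proof.
apply: (derive_quartic (p2 := \sum_(i < m)
    (2 * (dot (A i) u ^+ 2 + dot (A i) (Jm u) ^+ 2 - ymeas a xnat i)
       * (dot (A i) e ^+ 2 + dot (A i) (Jm e) ^+ 2)
     + 4 * (dot (A i) u * dot (A i) e + dot (A i) (Jm u) * dot (A i) (Jm e)) ^+ 2))
  (p3 := \sum_(i < m) 4 * (dot (A i) u * dot (A i) e + dot (A i) (Jm u) * dot (A i) (Jm e))
       * (dot (A i) e ^+ 2 + dot (A i) (Jm e) ^+ 2))
  (p4 := \sum_(i < m) (dot (A i) e ^+ 2 + dot (A i) (Jm e) ^+ 2) ^+ 2)) => h.
rewrite !fobj_expand /Lf; apply: sum_quartic => i.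
rewrite [u + _]addrC dotDZr JDZ dotDZr; ring.
Qed.

Lemma gobj_expand (w : 'rV[R]_N) : gobj m sigma xnat w =
  8 * c * (dot w w ^+ 2 + dot z z ^+ 2 - (dot w z ^+ 2 + dot w (Jm z) ^+ 2) - dot w w * dot z z).
Proof.
rewrite /gobj cabs_cinner2 vplusK !cnorm_dot vplusK.
have E (d : R) : 0 <= d -> Num.sqrt d ^+ 4 = d ^+ 2.
  by move=> d0; rewrite (_ : 4 = 2 * 2)%N // exprM sqr_sqrtr.
by rewrite !E ?dot_ge0 // !sqr_sqrtr ?dot_ge0.
Qed.

Definition Lg (u e : 'rV[R]_N) : R :=
  8 * c * (4 * dot u u * dot u e - 2 * dot u z * dot e z - 2 * dot u (Jm z) * dot e (Jm z)
     - 2 * dot u e * dot z z).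

Lemma Dg (u e : 'rV[R]_N) : 'D_e (gobj m sigma xnat) u = Lg u e.
Proof.
apply: (derive_quartic
  (p2 := 8 * c * (4 * dot u e ^+ 2 + 2 * dot u u * dot e e - dot e z ^+ 2 - dot e (Jm z) ^+ 2
         - dot e e * dot z z))
  (p3 := 8 * c * (4 * dot u e * dot e e))
  (p4 := 8 * c * dot e e ^+ 2)) => h.
rewrite !gobj_expand /Lg [u + _]addrC !dotDZl !dotDZr (dotC e u); ring.
Qed.

Lemma Lf_lin u k p q : Lf u (k *: p + q) = k * Lf u p + Lf u q.
Proof.
rewrite /Lf mulr_sumr -big_split; apply: eq_bigr => i _ /=.
rewrite JDZ !dotDZr; ring.
Qed.

Lemma Lg_lin u k p q : Lg u (k *: p + q) = k * Lg u p + Lg u q.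
Proof. rewrite /Lg !dotDZr !dotDZl; ring. Qed.

Definition Phi (D : tensor4 R N) (u e : 'rV[R]_N) : R :=
  tpair D u u u e + tpair D u u (Jm u) (Jm e) + tpair D (Jm u) (Jm u) u e
  + tpair D (Jm u) (Jm u) (Jm u) (Jm e) - tpair D z z u e - tpair D z z (Jm u) (Jm e)
  - tpair D (Jm z) (Jm z) u e - tpair D (Jm z) (Jm z) (Jm u) (Jm e).

Lemma tensT_pair (p1 p2 p3 p4 : 'rV[R]_N) :
  tpair (tensT a sigma) p1 p2 p3 p4 =
  c^-1 * \sum_(i < m) (dot (A i) p1 * dot (A i) p2 * dot (A i) p3 * dot (A i) p4).
Proof.
rewrite /tensT (tpair_scale c^-1 (fun i1 i2 i3 i4 => \sum_(i < m)
   (A i 0 i1 * A i 0 i2 * A i 0 i3 * A i 0 i4))).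
by rewrite tpair_sum; congr (_ * _); apply: eq_bigr => i _; rewrite tpair_rank1.
Qed.

Lemma Lf_Phi (u e : 'rV[R]_N) : c != 0 -> Lf u e = 4 * c * Phi (tensT a sigma) u e.
Proof.
move=> c0; rewrite /Phi !tensT_pair /Lf.
rewrite (eq_bigr (fun i => 4 * (
   dot (A i) u * dot (A i) u * dot (A i) u * dot (A i) e
 + dot (A i) u * dot (A i) u * dot (A i) (Jm u) * dot (A i) (Jm e)
 + dot (A i) (Jm u) * dot (A i) (Jm u) * dot (A i) u * dot (A i) e
 + dot (A i) (Jm u) * dot (A i) (Jm u) * dot (A i) (Jm u) * dot (A i) (Jm e)
 - dot (A i) z * dot (A i) z * dot (A i) u * dot (A i) e
 - dot (A i) z * dot (A i) z * dot (A i) (Jm u) * dot (A i) (Jm e)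
 - dot (A i) (Jm z) * dot (A i) (Jm z) * dot (A i) u * dot (A i) e
 - dot (A i) (Jm z) * dot (A i) (Jm z) * dot (A i) (Jm u) * dot (A i) (Jm e)))); last first.
  by move=> i _; rewrite /ymeas cabs_cinner2; ring.
rewrite -mulr_sumr !(sumrB, big_split) /=.
by field.
Qed.

Lemma Lg_Phi (u e : 'rV[R]_N) : Lg u e = 4 * c * Phi (@tensS R N) u e.
Proof.
have r3 : dot u (Jm z) = - dot z (Jm u) by rewrite dotC dotJl.
have r4 : dot e (Jm z) = - dot z (Jm e) by rewrite dotC dotJl.
rewrite /Lg r3 r4 (dotC u z) (dotC e z).
rewrite /Phi !tensS_pair !dotJJ !dotJl !dotJself.
ring.
Qed.

Lemma Phi_bound (D : tensor4 R N) (u e : 'rV[R]_N) :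
  `|Phi D u e| <= opnorm D * (4 * (enorm u ^+ 2 + enorm z ^+ 2) * enorm u * enorm e).
Proof.
have H := tpair_abs_opnorm D.
move: (H u u u e) (H u u (Jm u) (Jm e)) (H (Jm u) (Jm u) u e) (H (Jm u) (Jm u) (Jm u) (Jm e))
  (H z z u e) (H z z (Jm u) (Jm e)) (H (Jm z) (Jm z) u e) (H (Jm z) (Jm z) (Jm u) (Jm e)).
rewrite !enormJ !ler_norml /Phi.
move=> /andP[h1 h1'] /andP[h2 h2'] /andP[h3 h3'] /andP[h4 h4'] /andP[h5 h5'] /andP[h6 h6']
  /andP[h7 h7'] /andP[h8 h8'].
apply/andP; split; lra.
Qed.

End Fix.

End Aux.

Theorem proposition3 (R : realType) :
  exists C1 : R, 0 < C1 /\
  forall (delta0 : R), 0 < delta0 ->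
  forall (n m : nat) (a : 'I_m -> cvec R n) (xnat : cvec R n) (sigma : R),
    (1 <= n)%N -> (1 <= m)%N -> xnat != 0 -> 0 < sigma ->
    opnorm (tsub (tensT a sigma) (@tensS R (n + n)%N)) < delta0 ->
    forall x : cvec R n,
      C1 * delta0 * cconst m sigma * (cnorm x + cnorm xnat) ^+ 3
        <= enorm (grad (gobj m sigma xnat) (vplus x)) ->
      grad (fobj a xnat) (vplus x) != 0.
Proof.
exists 16; split; first lra.
move=> delta0 d0 n m a xnat sigma n1 m1 xnz s0 Hop x Hg.
apply/negP => /eqP H0.
rewrite !cnorm_enorm in Hg.
set u := vplus x in H0 Hg.
set z := vplus xnat in Hg.
set c := cconst m sigma in Hg.
have c0 : 0 < c.
  by rewrite /c /cconst mulr_gt0 // ?ltr0n // exprn_gt0.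
set G := grad (gobj m sigma xnat) u in Hg.
have HG j : G 0 j = Lg m sigma xnat u (delta_mx 0 j) by rewrite /G /grad mxE Dg.
have HF j : Lf a xnat u (delta_mx 0 j) = 0.
  have E : (grad (fobj a xnat) u) 0 j = 0 by rewrite H0 mxE.
  by move: E; rewrite /grad mxE Df.
have nG : enorm G ^+ 2 = Lg m sigma xnat u G - Lf a xnat u G.
  rewrite enorm_sq (lin_expand (Lg_lin m sigma xnat u) G) (lin_expand (Lf_lin a xnat u) G).
  rewrite [X in _ - X]big1 ?subr0; last by move=> j _; rewrite HF mulr0.
  by apply: eq_bigr => j _; rewrite HG.
set D := tsub (tensT a sigma) (@tensS R (n + n)%N) in Hop.
have nG2 : enorm G ^+ 2 = - (4 * c * Phi xnat D u G).
  rewrite nG Lg_Phi (@Lf_Phi _ _ _ a sigma) ?lt0r_neq0 // /D /Phi !tpair_sub; rewrite -/c; ring.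
have Hb := Phi_bound xnat D u G.
rewrite -/z in Hb.
set om := opnorm D in Hop Hb.
set om1 := Num.max om (delta0 / 2).
have om1a : om <= om1 by rewrite le_max lexx.
have om1b : 0 <= om1 by rewrite le_max; apply/orP; right; lra.
have om1c : om1 < delta0 by rewrite gt_max Hop /=; lra.
set U := enorm u in Hg Hb. set Z := enorm z in Hg Hb. set g := enorm G in nG2 Hg Hb.
have U0 : 0 <= U by apply: enorm_ge0.
have g0 : 0 <= g by apply: enorm_ge0.
have Zp : 0 < Z.
  rewrite lt_def enorm_ge0 andbT; apply/eqP => /enorm_eq0 z0.
  move: xnz; rewrite (vplus_dot_eq0 (x := xnat)) ?eqxx //.
  by rewrite -/z z0 /dot big1 // => j _; rewrite mxE mul0r.
have Y0 : 0 <= 4 * (U ^+ 2 + Z ^+ 2) * U * g by rewrite !mulr_ge0 // addr_ge0 // sqr_ge0.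
have Hb2 : om * (4 * (U ^+ 2 + Z ^+ 2) * U * g) <= om1 * (4 * (U ^+ 2 + Z ^+ 2) * U * g).
  by apply: ler_wpM2r.
have Hphi := ler_normr (Phi xnat D u G).
set P := Phi xnat D u G in nG2 Hb Hphi.
have H1 : g ^+ 2 <= 4 * c * (om1 * (4 * (U ^+ 2 + Z ^+ 2) * U * g)).
  rewrite nG2 -mulrN; apply: ler_wpM2l; first lra.
  apply: le_trans Hb2; apply: le_trans Hb; rewrite -normrN; exact: ler_norm.
set W := (U + Z) ^+ 3.
have W0 : 0 < W by rewrite /W exprn_gt0 // ltr_wpDl.
have VW : (U ^+ 2 + Z ^+ 2) * U <= W.
  rewrite /W; nra.
have gp : 0 < g.
  apply: lt_le_trans Hg; apply: mulr_gt0; last exact: W0.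
  by apply: mulr_gt0 => //; apply: mulr_gt0.
have H2 : g <= 16 * c * om1 * ((U ^+ 2 + Z ^+ 2) * U).
  rewrite -(ler_pM2r gp).
  have -> : 16 * c * om1 * ((U ^+ 2 + Z ^+ 2) * U) * g = 4 * c * (om1 * (4 * (U ^+ 2 + Z ^+ 2) * U * g)) by ring.
  by rewrite -expr2.
have H3 : 16 * c * om1 * ((U ^+ 2 + Z ^+ 2) * U) <= 16 * c * om1 * W.
  by apply: ler_wpM2l => //; rewrite !mulr_ge0 // ltW.
have H4 : 16 * c * om1 * W < 16 * delta0 * c * W.
  have cW : 0 < c * W by apply: mulr_gt0.
  have -> : 16 * c * om1 * W = 16 * (c * W) * om1 by ring.
  have -> : 16 * delta0 * c * W = 16 * (c * W) * delta0 by ring.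
  by rewrite ltr_pM2l // mulr_gt0.
have := le_lt_trans (le_trans H2 H3) H4.
by rewrite ltNge Hg.
Qed.
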